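(* Let $G_1=(\{p_j\},\{\mu_j\},\{\sigma_j^2\})_{j=1}^n$ and $G_2=(\{p'_k\},\{\mu'_k\},\{\sigma_k'^2\})_{k=1}^{n'}$ be univariate Gaussian mixtures with all $\sigma_j>0$ and $\sigma'_k>0$, and let $L=C_2^2(G_1,G_2)$, regarded as a function of the parameters $\mu_1,\dots,\mu_n,\sigma_1,\dots,\sigma_n$ of $G_1$ (with $G_2$ and $\{p_j\}$ fixed). Then for every $j=1,\dots,n$, $$\left|\frac{\partial L}{\partial\mu_j}\right|\le 4,\qquad \left|\frac{\partial L}{\partial\sigma_j}\right|\le 4.$$ In particular $L$ is globally Lipschitz in $\{\mu_j\}$ and $\{\sigma_j\}$.
   Context: A univariate Gaussian mixture $G=(\{p_j\},\{\mu_j\},\{\sigma_j^2\})_{j=1}^n$ has $p_j\ge0$, $\sum_jp_j=1$, $\mu_j\in\mathbb{R}$, $\sigma_j>0$, and CDF $\sum_jp_j\Phi((x-\mu_j)/\sigma_j)$, with $\Phi$ the standard normal CDF. The Cramér 2-distance is $C_2(G_1,G_2)=\left(\int_{\mathbb{R}}|\mathrm{CDF}(G_1)-\mathrm{CDF}(G_2)|^2dx\right)^{1/2}$. *)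

(* Defs.v *)
From Stdlib Require Import Reals Lra Lia.
From Coquelicot Require Import Coquelicot.
Open Scope R_scope.

Definition std_normal_pdf (x : R) : R := exp (- (x ^ 2) / 2) / sqrt (2 * PI).
Definition Phi (x : R) : R :=
  RInt_gen std_normal_pdf (Rbar_locally m_infty) (at_point x).

Fixpoint sumR (n : nat) (f : nat -> R) : R :=
  match n with
  | O => 0
  | S k => sumR k f + f k
  end.

(* A mixture with n components is given by weights p, means mu, std devs sigma
   (only indices 0..n-1 are used). *)
Definition is_gmixture (n : nat) (p mu sigma : nat -> R) : Prop :=
  (forall j, (j < n)%nat -> 0 <= p j) /\ sumR n p = 1 /\
  (forall j, (j < n)%nat -> 0 < sigma j).

Definition mixture_cdf (n : nat) (p mu sigma : nat -> R) (x : R) : R :=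
  sumR n (fun j => p j * Phi ((x - mu j) / sigma j)).

Definition cramer2_sq (n : nat) (p mu sigma : nat -> R)
                      (n' : nat) (p' mu' sigma' : nat -> R) : R :=
  RInt_gen (fun x => (mixture_cdf n p mu sigma x - mixture_cdf n' p' mu' sigma' x) ^ 2)
           (Rbar_locally m_infty) (Rbar_locally p_infty).

Definition upd (f : nat -> R) (j : nat) (v : R) : nat -> R :=
  fun i => if Nat.eq_dec i j then v else f i.

(* Main.v *)
Require Import Defs.
From Stdlib Require Import Reals.
From Coquelicot Require Import Coquelicot.
From Stdlib Require Import Lra Lia.
Open Scope R_scope.

Lemma ball_R (l z e : R) : ball l e z <-> Rabs (z - l) < e.
Proof. unfold ball; simpl; unfold AbsRing_ball, abs, minus, plus, opp; simpl. tauto. Qed.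

Lemma Rabs_le_between a b : Rabs a <= b -> -b <= a <= b.
Proof. unfold Rabs; destruct Rcase_abs; lra. Qed.

Definition ctsR (f : R -> R) := forall x, continuous f x.

Lemma ex_RInt_cts f a b : ctsR f -> ex_RInt f a b.
Proof. intros H; apply (ex_RInt_continuous (V:=R_CompleteNormedModule)); intros; apply H. Qed.

Lemma gen_left_of (f : R -> R) b l : ctsR f ->
  (forall eps, 0 < eps -> exists M, forall a, a < M -> Rabs (RInt f a b - l) < eps) ->
  is_RInt_gen f (Rbar_locally m_infty) (at_point b) l.
Proof.
  intros Hc H. unfold is_RInt_gen. apply (proj2 (filterlimi_locally _ _)).
  intros eps. destruct (H eps (cond_pos eps)) as [M HM].
  apply (Filter_prod _ _ _ (fun a => a < M) (fun y => y = b)); [exists M; auto|reflexivity|].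
  intros x y Hx Hy. subst y. exists (RInt f x b). split.
  - apply (RInt_correct (V:=R_CompleteNormedModule)), ex_RInt_cts, Hc.
  - apply ball_R. apply HM; auto.
Qed.

Lemma gen_right_of (f : R -> R) b l : ctsR f ->
  (forall eps, 0 < eps -> exists M, forall a, M < a -> Rabs (RInt f b a - l) < eps) ->
  is_RInt_gen f (at_point b) (Rbar_locally p_infty) l.
Proof.
  intros Hc H. unfold is_RInt_gen. apply (proj2 (filterlimi_locally _ _)).
  intros eps. destruct (H eps (cond_pos eps)) as [M HM].
  apply (Filter_prod _ _ _ (fun y => y = b) (fun a => M < a)); [reflexivity|exists M; auto|].
  intros x y Hx Hy. subst x. exists (RInt f b y). split.
  - apply (RInt_correct (V:=R_CompleteNormedModule)), ex_RInt_cts, Hc.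
  - apply ball_R. apply HM; auto.
Qed.

Lemma gen_left_to (f : R -> R) b l :
  is_RInt_gen f (Rbar_locally m_infty) (at_point b) l ->
  (forall eps, 0 < eps -> exists M, forall a, a < M -> Rabs (RInt f a b - l) < eps).
Proof.
  intros H eps Heps. unfold is_RInt_gen in H.
  destruct (proj1 (filterlimi_locally _ _) H (mkposreal eps Heps)) as [P Q [M HM] HQ HPQ].
  exists M. intros a Ha. destruct (HPQ a b (HM a Ha) HQ) as [z [Hz1 Hz2]].
  apply ball_R in Hz2. simpl in *. rewrite (is_RInt_unique _ _ _ _ Hz1). exact Hz2.
Qed.

Lemma gen_right_to (f : R -> R) b l :
  is_RInt_gen f (at_point b) (Rbar_locally p_infty) l ->
  (forall eps, 0 < eps -> exists M, forall a, M < a -> Rabs (RInt f b a - l) < eps).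
Proof.
  intros H eps Heps. unfold is_RInt_gen in H.
  destruct (proj1 (filterlimi_locally _ _) H (mkposreal eps Heps)) as [P Q HP [M HM] HPQ].
  exists M. intros a Ha. destruct (HPQ b a HP (HM a Ha)) as [z [Hz1 Hz2]].
  apply ball_R in Hz2. simpl in *. rewrite (is_RInt_unique _ _ _ _ Hz1). exact Hz2.
Qed.

Lemma Chasles_R f a b c : ctsR f -> RInt f a b + RInt f b c = RInt f a c.
Proof. intros H. apply (RInt_Chasles (V:=R_CompleteNormedModule)); apply ex_RInt_cts; auto. Qed.

Lemma RInt_point_R f a : RInt f a a = 0.
Proof. apply (RInt_point (V:=R_CompleteNormedModule)). Qed.

Lemma RInt_deriv_R (h H : R -> R) a b : ctsR h -> (forall x, Rmin a b <= x <= Rmax a b -> is_derive H x (h x)) ->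
  RInt h a b = H b - H a.
Proof.
  intros Hc Hd. apply is_RInt_unique.
  apply (is_RInt_derive (V:=R_CompleteNormedModule)); auto.
Qed.

Lemma antideriv_left (h H : R -> R) b L : ctsR h -> (forall x, x <= b -> is_derive H x (h x)) ->
  (forall eps, 0 < eps -> exists M, forall a, a < M -> Rabs (H a - L) < eps) ->
  is_RInt_gen h (Rbar_locally m_infty) (at_point b) (H b - L).
Proof.
  intros Hc Hd HL. apply gen_left_of; auto. intros eps Heps.
  destruct (HL eps Heps) as [M HM]. exists (Rmin M b). intros a Ha.
  assert (a < M /\ a < b) as [H1 H2] by (unfold Rmin in Ha; destruct Rle_dec; lra).
  rewrite (RInt_deriv_R h H a b Hc).
  - replace (H b - H a - (H b - L)) with (- (H a - L)) by ring. rewrite Rabs_Ropp. auto.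
  - intros x Hx. apply Hd. unfold Rmax in Hx; destruct Rle_dec; lra.
Qed.

Lemma antideriv_right (h H : R -> R) b L : ctsR h -> (forall x, b <= x -> is_derive H x (h x)) ->
  (forall eps, 0 < eps -> exists M, forall a, M < a -> Rabs (H a - L) < eps) ->
  is_RInt_gen h (at_point b) (Rbar_locally p_infty) (L - H b).
Proof.
  intros Hc Hd HL. apply gen_right_of; auto. intros eps Heps.
  destruct (HL eps Heps) as [M HM]. exists (Rmax M b). intros a Ha.
  assert (M < a /\ b < a) as [H1 H2] by (unfold Rmax in Ha; destruct Rle_dec; lra).
  rewrite (RInt_deriv_R h H b a Hc).
  - replace (H a - H b - (L - H b)) with (H a - L) by ring. auto.
  - intros x Hx. apply Hd. unfold Rmin in Hx; destruct Rle_dec; lra.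
Qed.

Lemma le_lim_left g b lg : ctsR g -> (forall x, x <= b -> 0 <= g x) ->
  is_RInt_gen g (Rbar_locally m_infty) (at_point b) lg -> forall a, a <= b -> RInt g a b <= lg.
Proof.
  intros Hc Hp Hg a Ha. destruct (Rle_lt_dec (RInt g a b) lg) as [|Hlt]; auto.
  exfalso. destruct (gen_left_to g b lg Hg (RInt g a b - lg)) as [M HM]; [lra|].
  set (a' := Rmin a (M - 1)).
  assert (a' <= a) by (unfold a', Rmin; destruct Rle_dec; lra).
  assert (a' < M) by (unfold a', Rmin; destruct Rle_dec; lra).
  specialize (HM a' H0).
  rewrite <- (Chasles_R g a' a b Hc) in HM.
  assert (0 <= RInt g a' a).
  { apply RInt_ge_0; auto. apply ex_RInt_cts; auto. intros; apply Hp; lra. }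
  apply Rabs_def2 in HM. lra.
Qed.

Lemma le_lim_right g b lg : ctsR g -> (forall x, b <= x -> 0 <= g x) ->
  is_RInt_gen g (at_point b) (Rbar_locally p_infty) lg -> forall a, b <= a -> RInt g b a <= lg.
Proof.
  intros Hc Hp Hg a Ha. destruct (Rle_lt_dec (RInt g b a) lg) as [|Hlt]; auto.
  exfalso. destruct (gen_right_to g b lg Hg (RInt g b a - lg)) as [M HM]; [lra|].
  set (a' := Rmax a (M + 1)).
  assert (a <= a') by (unfold a', Rmax; destruct Rle_dec; lra).
  assert (M < a') by (unfold a', Rmax; destruct Rle_dec; lra).
  specialize (HM a' H0).
  rewrite <- (Chasles_R g b a a' Hc) in HM.
  assert (0 <= RInt g a a').
  { apply RInt_ge_0; auto. apply ex_RInt_cts; auto. intros; apply Hp; lra. }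
  apply Rabs_def2 in HM. lra.
Qed.

Lemma mono_left f g b lg : ctsR f -> ctsR g -> (forall x, x <= b -> 0 <= f x <= g x) ->
  is_RInt_gen g (Rbar_locally m_infty) (at_point b) lg ->
  exists l, is_RInt_gen f (Rbar_locally m_infty) (at_point b) l /\ 0 <= l <= lg.
Proof.
  intros Hf Hg Hfg HG.
  set (E := fun y => exists a, a <= b /\ y = RInt f a b).
  assert (HB : forall y, E y -> y <= lg).
  { intros y [a [Ha ->]]. apply Rle_trans with (RInt g a b).
    - apply RInt_le; auto; try apply ex_RInt_cts; auto. intros; apply Hfg; lra.
    - apply (le_lim_left g b lg); auto. intros; specialize (Hfg x H); lra. }
  assert (HE0 : E 0) by (exists b; split; [lra| now rewrite RInt_point_R]).
  destruct (completeness E) as [l [Hub Hlub]]; [exists lg; exact HB | exists 0; auto |].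
  exists l. split; [| split; [apply Hub; auto | apply Hlub; exact HB]].
  apply gen_left_of; auto. intros eps Heps.
  assert (exists a0, a0 <= b /\ l - eps < RInt f a0 b) as [a0 [Ha0 Hl0]].
  { apply Classical_Prop.NNPP. intros Hn. assert (l <= l - eps); [|lra].
    apply Hlub. intros y [a [Ha ->]]. apply Rnot_lt_le. intros Hc. apply Hn. exists a; auto. }
  exists a0. intros a Ha.
  assert (RInt f a b <= l) by (apply Hub; exists a; split; [lra|auto]).
  rewrite <- (Chasles_R f a a0 b Hf) in *.
  assert (0 <= RInt f a a0).
  { apply RInt_ge_0; try lra. apply ex_RInt_cts; auto. intros; apply Hfg; lra. }
  apply Rabs_def1; lra.
Qed.

Lemma mono_right f g b lg : ctsR f -> ctsR g -> (forall x, b <= x -> 0 <= f x <= g x) ->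
  is_RInt_gen g (at_point b) (Rbar_locally p_infty) lg ->
  exists l, is_RInt_gen f (at_point b) (Rbar_locally p_infty) l /\ 0 <= l <= lg.
Proof.
  intros Hf Hg Hfg HG.
  set (E := fun y => exists a, b <= a /\ y = RInt f b a).
  assert (HB : forall y, E y -> y <= lg).
  { intros y [a [Ha ->]]. apply Rle_trans with (RInt g b a).
    - apply RInt_le; auto; try apply ex_RInt_cts; auto. intros; apply Hfg; lra.
    - apply (le_lim_right g b lg); auto. intros; specialize (Hfg x H); lra. }
  assert (HE0 : E 0) by (exists b; split; [lra| now rewrite RInt_point_R]).
  destruct (completeness E) as [l [Hub Hlub]]; [exists lg; exact HB | exists 0; auto |].
  exists l. split; [| split; [apply Hub; auto | apply Hlub; exact HB]].
  apply gen_right_of; auto. intros eps Heps.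
  assert (exists a0, b <= a0 /\ l - eps < RInt f b a0) as [a0 [Ha0 Hl0]].
  { apply Classical_Prop.NNPP. intros Hn. assert (l <= l - eps); [|lra].
    apply Hlub. intros y [a [Ha ->]]. apply Rnot_lt_le. intros Hc. apply Hn. exists a; auto. }
  exists a0. intros a Ha.
  assert (RInt f b a <= l) by (apply Hub; exists a; split; [lra|auto]).
  rewrite <- (Chasles_R f b a0 a Hf) in *.
  assert (0 <= RInt f a0 a).
  { apply RInt_ge_0; try lra. apply ex_RInt_cts; auto. intros; apply Hfg; lra. }
  apply Rabs_def1; lra.
Qed.

Lemma cts_plus f g : ctsR f -> ctsR g -> ctsR (fun x => f x + g x).
Proof. intros Hf Hg x. apply (continuous_plus (V:=R_NormedModule) f g); auto. Qed.
Lemma cts_minus f g : ctsR f -> ctsR g -> ctsR (fun x => f x - g x).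
Proof. intros Hf Hg x. apply (continuous_minus (V:=R_NormedModule) f g); auto. Qed.
Lemma cts_mult f g : ctsR f -> ctsR g -> ctsR (fun x => f x * g x).
Proof. intros Hf Hg x. apply (continuous_mult (K:=R_AbsRing) f g); auto. Qed.
Lemma cts_const c : ctsR (fun _ => c).
Proof. intros x. apply continuous_const. Qed.
Lemma cts_id : ctsR (fun x => x).
Proof. intros x. apply continuous_id. Qed.
Lemma cts_comp f g : ctsR f -> ctsR g -> ctsR (fun x => g (f x)).
Proof. intros Hf Hg x. apply continuous_comp; auto. Qed.
Lemma cts_abs f : ctsR f -> ctsR (fun x => Rabs (f x)).
Proof. intros Hf x. apply continuous_Rabs_comp; auto. Qed.
Lemma cts_exp : ctsR exp.
Proof. intros x. apply continuous_exp. Qed.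

Lemma cmp_left f g b lg : ctsR f -> ctsR g -> (forall x, x <= b -> Rabs (f x) <= g x) ->
  is_RInt_gen g (Rbar_locally m_infty) (at_point b) lg ->
  exists l, is_RInt_gen f (Rbar_locally m_infty) (at_point b) l /\ Rabs l <= lg.
Proof.
  intros Hf Hg Hfg HG.
  assert (HG2 : is_RInt_gen (fun x => 2 * g x) (Rbar_locally m_infty) (at_point b) (2 * lg)).
  { apply (is_RInt_gen_scal (V:=R_NormedModule) g 2 lg HG). }
  destruct (mono_left (fun x => f x + g x) (fun x => 2 * g x) b (2 * lg)) as [l1 [H1 H1b]]; auto.
  - apply cts_plus; auto.
  - apply cts_mult; auto. apply cts_const.
  - intros x Hx. specialize (Hfg x Hx). pose proof (Rabs_le_between _ _ Hfg) as Hb; lra.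
  - exists (l1 - lg). split.
    + pose proof (is_RInt_gen_minus (V:=R_NormedModule) _ _ _ _ H1 HG) as Hm.
      replace f with (fun y => minus (f y + g y) (g y)).
      * exact Hm.
      * apply FunctionalExtensionality.functional_extensionality; intros y.
        unfold minus, plus, opp; simpl. ring.
    + apply Rabs_le; lra.
Qed.

Lemma cmp_right f g b lg : ctsR f -> ctsR g -> (forall x, b <= x -> Rabs (f x) <= g x) ->
  is_RInt_gen g (at_point b) (Rbar_locally p_infty) lg ->
  exists l, is_RInt_gen f (at_point b) (Rbar_locally p_infty) l /\ Rabs l <= lg.
Proof.
  intros Hf Hg Hfg HG.
  assert (HG2 : is_RInt_gen (fun x => 2 * g x) (at_point b) (Rbar_locally p_infty) (2 * lg)).
  { apply (is_RInt_gen_scal (V:=R_NormedModule) g 2 lg HG). }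
  destruct (mono_right (fun x => f x + g x) (fun x => 2 * g x) b (2 * lg)) as [l1 [H1 H1b]]; auto.
  - apply cts_plus; auto.
  - apply cts_mult; auto. apply cts_const.
  - intros x Hx. specialize (Hfg x Hx). pose proof (Rabs_le_between _ _ Hfg) as Hb; lra.
  - exists (l1 - lg). split.
    + pose proof (is_RInt_gen_minus (V:=R_NormedModule) _ _ _ _ H1 HG) as Hm.
      replace f with (fun y => minus (f y + g y) (g y)).
      * exact Hm.
      * apply FunctionalExtensionality.functional_extensionality; intros y.
        unfold minus, plus, opp; simpl. ring.
    + apply Rabs_le; lra.
Qed.

Lemma cmp_full f g b g1 g2 : ctsR f -> ctsR g -> (forall x, Rabs (f x) <= g x) ->
  is_RInt_gen g (Rbar_locally m_infty) (at_point b) g1 ->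
  is_RInt_gen g (at_point b) (Rbar_locally p_infty) g2 ->
  exists l, is_RInt_gen f (Rbar_locally m_infty) (Rbar_locally p_infty) l /\ Rabs l <= g1 + g2.
Proof.
  intros Hf Hg Hfg H1 H2.
  destruct (cmp_left f g b g1) as [l1 [L1 B1]]; auto.
  destruct (cmp_right f g b g2) as [l2 [L2 B2]]; auto.
  exists (l1 + l2). split.
  - apply (is_RInt_gen_Chasles (V:=R_NormedModule) f b l1 l2 L1 L2).
  - eapply Rle_trans; [apply Rabs_triang|lra].
Qed.

Lemma gen_full (f : R -> R) b l1 l2 :
  is_RInt_gen f (Rbar_locally m_infty) (at_point b) l1 ->
  is_RInt_gen f (at_point b) (Rbar_locally p_infty) l2 ->
  is_RInt_gen f (Rbar_locally m_infty) (Rbar_locally p_infty) (l1 + l2).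
Proof. intros L1 L2. apply (is_RInt_gen_Chasles (V:=R_NormedModule) f b l1 l2 L1 L2). Qed.

Lemma cts_of_deriv (f df : R -> R) : (forall x, is_derive f x (df x)) -> ctsR f.
Proof. intros H x. apply (ex_derive_continuous (K:=R_AbsRing) (V:=R_NormedModule)). exists (df x). apply H. Qed.

Lemma cts_ext f g : (forall x, f x = g x) -> ctsR f -> ctsR g.
Proof. intros E H x. apply (continuous_ext f g); auto. Qed.

Lemma exp_le x y : x <= y -> exp x <= exp y.
Proof. intros [H|H]; [left; apply exp_increasing; auto| subst; lra]. Qed.

Lemma exp_small eps : 0 < eps -> exists M, forall y, y < M -> exp y < eps.
Proof. intros H. exists (ln eps). intros y Hy. rewrite <- (exp_ln eps H). apply exp_increasing; auto. Qed.

Definition phi := std_normal_pdf.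
Definition s2pi := sqrt (2 * PI).
Definition A0 := exp (1/2) / s2pi.

Lemma PI_gt3 : 3 < PI.
Proof. pose proof PI2_3_2. lra. Qed.

Lemma s2pi_ge2 : 2 <= s2pi.
Proof. unfold s2pi. apply Rle_trans with (sqrt (2*2)); [rewrite sqrt_square; lra|]. apply sqrt_le_1_alt. pose proof PI_gt3; lra. Qed.

Lemma s2pi_sq : s2pi * s2pi = 2 * PI.
Proof. unfold s2pi. apply sqrt_sqrt. pose proof PI_gt3; lra. Qed.

Lemma phi_pos x : 0 < phi x.
Proof. unfold phi, std_normal_pdf. fold s2pi. pose proof s2pi_ge2. apply Rdiv_lt_0_compat; [apply exp_pos|lra]. Qed.

Lemma phi_le_exp t : phi t <= A0 * exp t /\ phi t <= A0 * exp (- t).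
Proof.
  unfold phi, std_normal_pdf, A0. fold s2pi. pose proof s2pi_ge2.
  assert (Hs : 0 < / s2pi) by (apply Rinv_0_lt_compat; lra).
  assert (exp (- (t ^ 2) / 2) <= exp (1/2) * exp t) by (rewrite <- exp_plus; apply exp_le; pose proof (pow2_ge_0 (t+1)); pose proof (pow2_ge_0 (t-1)); nra).
  assert (exp (- (t ^ 2) / 2) <= exp (1/2) * exp (- t)) by (rewrite <- exp_plus; apply exp_le; pose proof (pow2_ge_0 (t+1)); pose proof (pow2_ge_0 (t-1)); nra).
  split.
  - replace (exp (1 / 2) / s2pi * exp t) with ((exp (1/2) * exp t) * / s2pi) by (field; lra).
    apply Rmult_le_compat_r; lra.
  - replace (exp (1 / 2) / s2pi * exp (-t)) with ((exp (1/2) * exp (-t)) * / s2pi) by (field; lra).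
    apply Rmult_le_compat_r; lra.
Qed.

Lemma phi_le_exp0 t : phi t <= exp (- (t ^ 2) / 2).
Proof.
  unfold phi, std_normal_pdf. fold s2pi. pose proof s2pi_ge2. pose proof (exp_pos (- (t ^ 2) / 2)).
  unfold Rdiv at 1. apply Rle_trans with (exp (- (t ^ 2) / 2) * 1); [|lra].
  apply Rmult_le_compat_l; [lra|]. rewrite <- Rinv_1. apply Rinv_le_contravar; lra.
Qed.

Lemma phi_deriv t : is_derive phi t (- t * phi t).
Proof.
  unfold phi, std_normal_pdf. auto_derive; auto.
  assert (E: - (t*(t*1)) * /2 = - t^2/2) by field. rewrite E. fold s2pi. pose proof s2pi_ge2. field. lra.
Qed.

Lemma cts_phi : ctsR phi.
Proof. apply (cts_of_deriv phi (fun t => - t * phi t)). apply phi_deriv. Qed.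

Lemma A0_pos : 0 < A0.
Proof. unfold A0. pose proof s2pi_ge2. apply Rdiv_lt_0_compat; [apply exp_pos|lra]. Qed.

Lemma A0_sq : 4 * A0 * A0 <= 2.
Proof.
  unfold A0. pose proof s2pi_ge2. pose proof s2pi_sq as Hsq. pose proof exp_le_3. pose proof PI_gt3.
  assert (He : exp (1/2) * exp (1/2) = exp 1) by (rewrite <- exp_plus; f_equal; lra).
  assert (E: 4 * (exp (1/2)/s2pi) * (exp(1/2)/s2pi) = 4 * (exp(1/2)*exp(1/2)) / (s2pi*s2pi)) by (field; lra).
  rewrite E, He, Hsq. apply Rmult_le_reg_r with (2 * PI); [lra|]. unfold Rdiv.
  rewrite Rmult_assoc, Rinv_l by lra. lra.
Qed.

Lemma PF_Rbar x : ProperFilter' (Rbar_locally x).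
Proof. apply Proper_StrongProper, Rbar_locally_filter. Qed.
Lemma PF_at (x : R) : ProperFilter' (at_point x).
Proof. apply Proper_StrongProper, at_point_filter. Qed.
#[export] Hint Resolve PF_Rbar PF_at : core.

Lemma gen_uniq (f : R -> R) Fa Fb (H1 : ProperFilter' Fa) (H2 : ProperFilter' Fb) l1 l2 :
  is_RInt_gen f Fa Fb l1 -> is_RInt_gen f Fa Fb l2 -> l1 = l2.
Proof.
  intros A B. rewrite <- (is_RInt_gen_unique (V:=R_CompleteNormedModule) f l1 A).
  apply (is_RInt_gen_unique (V:=R_CompleteNormedModule)); auto.
Qed.

Ltac gen_val := apply (is_RInt_gen_unique (V:=R_CompleteNormedModule)); try apply PF_Rbar; try apply PF_at.

Lemma exp_lim_left (K k m : R) : 0 < k ->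
  forall eps, 0 < eps -> exists M, forall a, a < M -> Rabs (K * exp ((a - m) / k) - 0) < eps.
Proof.
  intros Hk eps Heps.
  destruct (exp_small (eps / (Rabs K + 1))) as [M HM].
  { apply Rdiv_lt_0_compat; auto. pose proof (Rabs_pos K); lra. }
  exists (m + k * M). intros a Ha. rewrite Rminus_0_r, Rabs_mult, (Rabs_right (exp _)) by (left; apply exp_pos).
  assert (Hlt : exp ((a - m) / k) < eps / (Rabs K + 1)).
  { apply HM. apply Rmult_lt_reg_l with k; auto. unfold Rdiv. 
    replace (k * ((a - m) * / k)) with (a - m) by (field; lra). lra. }
  pose proof (Rabs_pos K). pose proof (exp_pos ((a - m) / k)).
  apply Rle_lt_trans with ((Rabs K + 1) * exp ((a - m) / k)); [nra|].
  apply Rmult_lt_reg_l with (/ (Rabs K + 1)); [apply Rinv_0_lt_compat; lra|].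
  rewrite <- Rmult_assoc, Rinv_l by lra. unfold Rdiv in Hlt. lra.
Qed.

Lemma exp_lim_right (K k m : R) : 0 < k ->
  forall eps, 0 < eps -> exists M, forall a, M < a -> Rabs (K * exp (- ((a - m) / k)) - 0) < eps.
Proof.
  intros Hk eps Heps. destruct (exp_lim_left K k (- m) Hk eps Heps) as [M HM].
  exists (- M). intros a Ha. replace (- ((a - m) / k)) with (((- a) - - m) / k) by (field; lra).
  apply HM. lra.
Qed.

Lemma exp_left_int (K k m b : R) : 0 < k ->
  is_RInt_gen (fun x => K * exp ((x - m) / k)) (Rbar_locally m_infty) (at_point b)
    (k * K * exp ((b - m) / k)).
Proof.
  intros Hk. replace (k * K * exp ((b - m) / k)) with ((k * K) * exp ((b - m) / k) - 0) by ring.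
  apply (antideriv_left _ (fun x => (k * K) * exp ((x - m) / k))).
  - apply cts_mult; [apply cts_const|]. apply cts_comp; [|apply cts_exp].
    apply (cts_of_deriv _ (fun _ => / k)). intros x. auto_derive; auto. field; lra.
  - intros x _. auto_derive; auto. unfold Rdiv, Rminus. field; lra.
  - apply exp_lim_left; auto.
Qed.

Lemma exp_right_int (K k m b : R) : 0 < k ->
  is_RInt_gen (fun x => K * exp (- ((x - m) / k))) (at_point b) (Rbar_locally p_infty)
    (k * K * exp (- ((b - m) / k))).
Proof.
  intros Hk. replace (k * K * exp (- ((b - m) / k))) with (0 - (- (k * K)) * exp (- ((b - m) / k))) by ring.
  apply (antideriv_right _ (fun x => (- (k * K)) * exp (- ((x - m) / k)))).
  - apply cts_mult; [apply cts_const|]. apply cts_comp; [|apply cts_exp].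
    apply (cts_of_deriv _ (fun _ => - / k)). intros x. auto_derive; auto. field; lra.
  - intros x _. auto_derive; auto. unfold Rdiv, Rminus. field; lra.
  - intros eps Heps. destruct (exp_lim_right (- (k * K)) k m Hk eps Heps) as [M HM].
    exists M. intros a Ha. specialize (HM a Ha). rewrite Rminus_0_r in HM.
    replace (- (k * K) * exp (- ((a - m) / k)) - 0) with (- (k * K) * exp (- ((a - m) / k))) by ring. auto.
Qed.

Lemma exp_lin0 x : exp ((x - 0) / 1) = exp x.
Proof. f_equal; field. Qed.
Lemma exp_lin0' x : exp (- ((x - 0) / 1)) = exp (- x).
Proof. f_equal; field. Qed.

Lemma Phi_left y : is_RInt_gen phi (Rbar_locally m_infty) (at_point y) (Phi y) /\ 0 <= Phi y <= A0 * exp y.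
Proof.
  destruct (mono_left phi (fun x => A0 * exp ((x - 0) / 1)) y (1 * A0 * exp ((y - 0) / 1))) as [l [Hl Hb]].
  - apply cts_phi.
  - apply cts_mult; [apply cts_const|]. apply cts_comp; [|apply cts_exp].
    apply (cts_of_deriv _ (fun _ => / 1)). intros x. auto_derive; auto; field.
  - intros t _. rewrite exp_lin0. pose proof (phi_pos t). pose proof (phi_le_exp t). lra.
  - apply exp_left_int; lra.
  - assert (Phi y = l) as ->. { unfold Phi. gen_val. exact Hl. }
    split; auto. rewrite exp_lin0 in Hb. lra.
Qed.

Lemma R0_ex : exists R0, is_RInt_gen phi (at_point 0) (Rbar_locally p_infty) R0 /\ 0 <= R0 <= A0.
Proof.
  destruct (mono_right phi (fun x => A0 * exp (- ((x - 0) / 1))) 0 (1 * A0 * exp (- ((0 - 0) / 1)))) as [l [Hl Hb]].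
  - apply cts_phi.
  - apply cts_mult; [apply cts_const|]. apply cts_comp; [|apply cts_exp].
    apply (cts_of_deriv _ (fun _ => - / 1)). intros x. auto_derive; auto; field.
  - intros x _. rewrite exp_lin0'. pose proof (phi_pos x). pose proof (phi_le_exp x). lra.
  - apply exp_right_int; lra.
  - exists l. split; auto. rewrite exp_lin0', Ropp_0, exp_0 in Hb. lra.
Qed.

Definition cc : R := RInt_gen phi (Rbar_locally m_infty) (Rbar_locally p_infty).

Lemma Phi_chasles y z : Phi y + RInt phi y z = Phi z.
Proof.
  destruct (Phi_left y) as [H1 _]. 
  pose proof (is_RInt_gen_Chasles (V:=R_NormedModule) (Fa := Rbar_locally m_infty) (Fc := at_point z) phi y (Phi y) (RInt phi y z) H1) as H.
  symmetry. unfold Phi at 2. gen_val. apply H.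
  apply is_RInt_gen_at_point. apply (RInt_correct (V:=R_CompleteNormedModule)). apply ex_RInt_cts, cts_phi.
Qed.

Lemma Phi_right y : is_RInt_gen phi (at_point y) (Rbar_locally p_infty) (cc - Phi y) /\ 0 <= cc - Phi y <= A0 * exp (- y).
Proof.
  destruct R0_ex as [R0 [HR0 _]].
  assert (Hcc : cc = Phi 0 + R0).
  { unfold cc. gen_val. destruct (Phi_left 0) as [H _].
    apply (is_RInt_gen_Chasles (V:=R_NormedModule) phi 0 _ _ H HR0). }
  assert (Hy : is_RInt_gen phi (at_point y) (Rbar_locally p_infty) (cc - Phi y)).
  { replace (cc - Phi y) with (RInt phi y 0 + R0).
    - apply (is_RInt_gen_Chasles (V:=R_NormedModule) phi 0 _ _); auto.
      apply is_RInt_gen_at_point. apply (RInt_correct (V:=R_CompleteNormedModule)). apply ex_RInt_cts, cts_phi.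
    - rewrite Hcc, <- (Phi_chasles y 0). ring. }
  split; auto.
  destruct (mono_right phi (fun x => A0 * exp (- ((x - 0) / 1))) y (1 * A0 * exp (- ((y - 0) / 1)))) as [l [Hl Hb]].
  - apply cts_phi.
  - apply cts_mult; [apply cts_const|]. apply cts_comp; [|apply cts_exp].
    apply (cts_of_deriv _ (fun _ => - / 1)). intros x. auto_derive; auto; field.
  - intros x _. rewrite exp_lin0'. pose proof (phi_pos x). pose proof (phi_le_exp x). lra.
  - apply exp_right_int; lra.
  - assert (cc - Phi y = l) as ->.
    { apply (gen_uniq phi _ _ (PF_at y) (PF_Rbar p_infty)); auto. }
    rewrite exp_lin0' in Hb. lra.
Qed.

Lemma Phi_deriv y : is_derive Phi y (phi y).
Proof.
  apply is_derive_ext with (fun z => Phi 0 + RInt phi 0 z).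
  - intros z. apply Phi_chasles.
  - replace (phi y) with (0 + phi y) by ring. apply (is_derive_plus (K:=R_AbsRing) (V:=R_NormedModule)).
    + exact (is_derive_const (K:=R_AbsRing) (V:=R_NormedModule) (Phi 0) y).
    + apply (is_derive_RInt (V:=R_NormedModule) phi (fun z => RInt phi 0 z) 0 y).
      * apply filter_forall. intros z. apply (RInt_correct (V:=R_CompleteNormedModule)). apply ex_RInt_cts, cts_phi.
      * apply cts_phi.
Qed.

Lemma cts_Phi : ctsR Phi.
Proof. apply (cts_of_deriv Phi phi). apply Phi_deriv. Qed.

Lemma cc_bounds : 0 <= cc /\ cc * cc <= 2 /\ cc <= 2.
Proof.
  destruct (Phi_left 0) as [_ H1]. destruct (Phi_right 0) as [_ H2].
  rewrite exp_0 in H1. rewrite Ropp_0, exp_0 in H2. pose proof A0_sq. pose proof A0_pos.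
  assert (cc <= 2 * A0) by lra. assert (0 <= cc) by lra. split; [lra|split; nra].
Qed.

Lemma sumR_ext n f g : (forall i, (i < n)%nat -> f i = g i) -> sumR n f = sumR n g.
Proof. induction n; simpl; intros H; auto. rewrite IHn by (intros; apply H; lia). rewrite H by lia. auto. Qed.

Lemma sumR_le n f g : (forall i, (i < n)%nat -> f i <= g i) -> sumR n f <= sumR n g.
Proof. induction n; simpl; intros H; [lra|]. pose proof (IHn ltac:(intros; apply H; lia)). pose proof (H n ltac:(lia)). lra. Qed.

Lemma sumR_plus n f g : sumR n (fun i => f i + g i) = sumR n f + sumR n g.
Proof. induction n; simpl; [ring|rewrite IHn; ring]. Qed.

Lemma sumR_scal n c f : sumR n (fun i => c * f i) = c * sumR n f.
Proof. induction n; simpl; [ring|rewrite IHn; ring]. Qed.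

Lemma sumR_minus n f g : sumR n (fun i => f i - g i) = sumR n f - sumR n g.
Proof. induction n; simpl; [ring|rewrite IHn; ring]. Qed.

Lemma sumR_nonneg n f : (forall i, (i < n)%nat -> 0 <= f i) -> 0 <= sumR n f.
Proof. intros H. replace 0 with (sumR n (fun _ => 0)). apply sumR_le; auto. induction n; simpl; auto. rewrite IHn; [ring|intros; apply H; lia]. Qed.

Lemma sumR_term n f j : (j < n)%nat -> (forall i, (i < n)%nat -> 0 <= f i) -> f j <= sumR n f.
Proof.
  induction n; intros Hj H; [lia|]. simpl. destruct (Nat.eq_dec j n).
  - subst. pose proof (sumR_nonneg n f ltac:(intros; apply H; lia)). lra.
  - pose proof (IHn ltac:(lia) ltac:(intros; apply H; lia)). pose proof (H n ltac:(lia)). lra.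
Qed.

Lemma sumR_upd n (h : nat -> R -> R) g j v : (j < n)%nat ->
  sumR n (fun i => h i (upd g j v i)) = sumR n (fun i => h i (g i)) - h j (g j) + h j v.
Proof.
  induction n; intros Hj; [lia|]. simpl. unfold upd at 2. destruct (Nat.eq_dec n j).
  - subst. rewrite (sumR_ext j (fun i => h i (upd g j v i)) (fun i => h i (g i))). ring.
    intros i Hi. unfold upd. destruct (Nat.eq_dec i j); [lia|auto].
  - rewrite IHn by lia. ring.
Qed.

Lemma p_le1 n p mu sigma j : is_gmixture n p mu sigma -> (j < n)%nat -> 0 <= p j <= 1.
Proof. intros [H1 [H2 _]] Hj. split; auto. rewrite <- H2. apply sumR_term; auto. Qed.

Lemma cts_lin (m s : R) : ctsR (fun x => (x - m) / s).
Proof. apply (cts_mult (fun x => x - m) (fun _ => / s)); [apply (cts_minus (fun x => x) (fun _ => m)); [apply cts_id|apply cts_const]|apply cts_const]. Qed.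

Lemma cts_mixture n p mu sigma : ctsR (mixture_cdf n p mu sigma).
Proof.
  unfold mixture_cdf. induction n; simpl.
  - apply cts_const.
  - apply cts_plus; auto. apply cts_mult; [apply cts_const|]. apply cts_comp; [apply cts_lin|apply cts_Phi].
Qed.

Lemma mixture_bounds n p mu sigma x : is_gmixture n p mu sigma ->
  0 <= mixture_cdf n p mu sigma x <= cc.
Proof.
  intros [Hp [Hs _]]. unfold mixture_cdf. split.
  - apply sumR_nonneg. intros i Hi. apply Rmult_le_pos; auto. apply Phi_left.
  - replace cc with (sumR n (fun i => cc * p i)) by (rewrite sumR_scal, Hs; ring).
    apply sumR_le. intros i Hi. rewrite Rmult_comm. apply Rmult_le_compat_r; auto.
    destruct (Phi_right ((x - mu i) / sigma i)); lra.
Qed.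

Lemma sigma_bound n sigma : exists S, 0 < S /\ forall j, (j < n)%nat -> Rabs (sigma j) <= S.
Proof.
  exists (1 + sumR n (fun i => Rabs (sigma i))). split.
  - pose proof (sumR_nonneg n (fun i => Rabs (sigma i)) ltac:(intros; apply Rabs_pos)). lra.
  - intros j Hj. pose proof (sumR_term n (fun i => Rabs (sigma i)) j Hj ltac:(intros; apply Rabs_pos)). simpl in H. lra.
Qed.

Lemma lin_le_left x m s S : x <= 0 -> 0 < s -> s <= S -> (x - m) / s <= x / S + (- m / s).
Proof.
  intros Hx Hs HS. replace ((x - m) / s) with (x / s + - m / s) by (field; lra).
  apply Rplus_le_compat_r. unfold Rdiv. 
  assert (/ S <= / s) by (apply Rinv_le_contravar; lra).
  nra.
Qed.

Lemma mixture_left n p mu sigma S : is_gmixture n p mu sigma -> 0 < S -> (forall j, (j < n)%nat -> Rabs (sigma j) <= S) ->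
  exists K, 0 <= K /\ forall x, x <= 0 -> mixture_cdf n p mu sigma x <= K * exp (x / S).
Proof.
  intros [Hp [_ Hsg]] HS Hb. unfold mixture_cdf.
  exists (sumR n (fun i => p i * (A0 * exp (- mu i / sigma i)))). split.
  - apply sumR_nonneg. intros i Hi. apply Rmult_le_pos; auto. pose proof A0_pos. pose proof (exp_pos (- mu i / sigma i)). nra.
  - intros x Hx. rewrite Rmult_comm, <- sumR_scal. apply sumR_le. intros i Hi.
    replace (exp (x / S) * (p i * (A0 * exp (- mu i / sigma i)))) with (p i * (A0 * exp (x / S + - mu i / sigma i)))
      by (rewrite exp_plus; ring).
    apply Rmult_le_compat_l; auto. destruct (Phi_left ((x - mu i) / sigma i)) as [_ [_ H]].
    eapply Rle_trans; [exact H|]. apply Rmult_le_compat_l; [pose proof A0_pos; lra|]. apply exp_le.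
    apply lin_le_left; auto. specialize (Hb i Hi). specialize (Hsg i Hi). pose proof (Rle_abs (sigma i)). lra.
Qed.

Lemma mixture_right n p mu sigma S : is_gmixture n p mu sigma -> 0 < S -> (forall j, (j < n)%nat -> Rabs (sigma j) <= S) ->
  exists K, 0 <= K /\ forall x, 0 <= x -> cc - mixture_cdf n p mu sigma x <= K * exp (- (x / S)).
Proof.
  intros [Hp [Hs Hsg]] HS Hb. unfold mixture_cdf.
  exists (sumR n (fun i => p i * (A0 * exp (mu i / sigma i)))). split.
  - apply sumR_nonneg. intros i Hi. apply Rmult_le_pos; auto. pose proof A0_pos. pose proof (exp_pos (mu i / sigma i)). nra.
  - intros x Hx. assert (Ecc: cc = sumR n (fun i => p i * cc)) by (rewrite (sumR_ext n _ (fun i => cc * p i)) by (intros; ring); rewrite sumR_scal, Hs; ring).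
    rewrite Ecc at 1.
    rewrite <- sumR_minus. rewrite Rmult_comm, <- sumR_scal. apply sumR_le. intros i Hi.
    replace (exp (- (x / S)) * (p i * (A0 * exp (mu i / sigma i)))) with (p i * (A0 * exp (- (x / S + - mu i / sigma i))))
      by (replace (- (x / S + - mu i / sigma i)) with (- (x/S) + mu i / sigma i) by (unfold Rdiv; ring); rewrite exp_plus; ring).
    rewrite <- Rmult_minus_distr_l.
    apply Rmult_le_compat_l; auto. destruct (Phi_right ((x - mu i) / sigma i)) as [_ [_ H]].
    eapply Rle_trans; [exact H|]. apply Rmult_le_compat_l; [pose proof A0_pos; lra|]. apply exp_le.
    apply Ropp_le_contravar.
    specialize (Hb i Hi). specialize (Hsg i Hi). pose proof (Rle_abs (sigma i)).
    pose proof (lin_le_left (- x) (- mu i) (sigma i) S ltac:(lra) Hsg ltac:(lra)).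
    replace ((x - mu i) / sigma i) with (- ((- x - - mu i) / sigma i)) by (field; lra).
    replace (x / S + - mu i / sigma i) with (- (- x / S + - - mu i / sigma i)) by (field; lra). lra.
Qed.

Lemma diff_bounds n p mu sigma n' p' mu' sigma' :
  is_gmixture n p mu sigma -> is_gmixture n' p' mu' sigma' ->
  exists S K, 0 < S /\ 0 <= K /\ forall x,
    let D := mixture_cdf n p mu sigma x - mixture_cdf n' p' mu' sigma' x in
    Rabs D <= cc /\ (x <= 0 -> Rabs D <= K * exp (x / S)) /\ (0 <= x -> Rabs D <= K * exp (- (x / S))).
Proof.
  intros H1 H2. destruct (sigma_bound n sigma) as [S1 [HS1 HB1]]. destruct (sigma_bound n' sigma') as [S2 [HS2 HB2]].
  assert (HB1' : forall j, (j < n)%nat -> Rabs (sigma j) <= S1 + S2) by (intros j Hj; specialize (HB1 j Hj); lra).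
  assert (HB2' : forall j, (j < n')%nat -> Rabs (sigma' j) <= S1 + S2) by (intros j Hj; specialize (HB2 j Hj); lra).
  destruct (mixture_left n p mu sigma (S1+S2) H1 ltac:(lra) HB1') as [K1 [HK1 L1]].
  destruct (mixture_left n' p' mu' sigma' (S1+S2) H2 ltac:(lra) HB2') as [K2 [HK2 L2]].
  destruct (mixture_right n p mu sigma (S1+S2) H1 ltac:(lra) HB1') as [K3 [HK3 R1]].
  destruct (mixture_right n' p' mu' sigma' (S1+S2) H2 ltac:(lra) HB2') as [K4 [HK4 R2]].
  exists (S1 + S2), (K1 + K2 + K3 + K4). split; [lra|split; [lra|]].
  intros x D. pose proof (mixture_bounds n p mu sigma x H1). pose proof (mixture_bounds n' p' mu' sigma' x H2).
  split; [|split]; intros; unfold D; apply Rabs_le.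
  - lra.
  - specialize (L1 x H3). specialize (L2 x H3). pose proof (exp_pos (x / (S1 + S2))). nra.
  - specialize (R1 x H3). specialize (R2 x H3). pose proof (exp_pos (- (x / (S1 + S2)))). nra.
Qed.

Lemma cramer_is n p mu sigma n' p' mu' sigma' :
  is_gmixture n p mu sigma -> is_gmixture n' p' mu' sigma' ->
  is_RInt_gen (fun x => (mixture_cdf n p mu sigma x - mixture_cdf n' p' mu' sigma' x) ^ 2)
    (Rbar_locally m_infty) (Rbar_locally p_infty) (cramer2_sq n p mu sigma n' p' mu' sigma').
Proof.
  intros H1 H2. destruct (diff_bounds _ _ _ _ _ _ _ _ H1 H2) as [S [K [HS [HK HD]]]].
  pose proof cc_bounds as Hcc.
  set (f := fun x => (mixture_cdf n p mu sigma x - mixture_cdf n' p' mu' sigma' x) ^ 2).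
  assert (Hf : ctsR f).
  { apply (cts_ext (fun x => (mixture_cdf n p mu sigma x - mixture_cdf n' p' mu' sigma' x) * (mixture_cdf n p mu sigma x - mixture_cdf n' p' mu' sigma' x))).
    intros; unfold f; ring. apply cts_mult; apply cts_minus; apply cts_mixture. }
  destruct (cmp_left f (fun x => (cc * K) * exp ((x - 0) / S)) 0 (S * (cc * K) * exp ((0 - 0) / S))) as [l1 [L1 _]].
  - auto.
  - apply cts_mult; [apply cts_const|]. apply cts_comp; [apply cts_lin|apply cts_exp].
  - intros x Hx. destruct (HD x) as [Ha [Hb _]]. specialize (Hb Hx). unfold f.
    replace ((x - 0) / S) with (x / S) by (field; lra). rewrite <- RPow_abs.
    pose proof (Rabs_pos (mixture_cdf n p mu sigma x - mixture_cdf n' p' mu' sigma' x)). simpl. nra.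
  - apply exp_left_int; auto.
  - destruct (cmp_right f (fun x => (cc * K) * exp (- ((x - 0) / S))) 0 (S * (cc * K) * exp (- ((0 - 0) / S)))) as [l2 [L2 _]].
    + auto.
    + apply cts_mult; [apply cts_const|]. apply cts_comp; [|apply cts_exp].
      apply (cts_ext (fun x => (x - 0) * (- / S))); [intros; unfold Rdiv; ring|].
      apply (cts_mult (fun x => x - 0) (fun _ => - / S)); [apply (cts_minus (fun x => x) (fun _ => 0)); [apply cts_id|apply cts_const]|apply cts_const].
    + intros x Hx. destruct (HD x) as [Ha [_ Hb]]. specialize (Hb Hx). unfold f.
      replace ((x - 0) / S) with (x / S) by (field; lra). rewrite <- RPow_abs.
      pose proof (Rabs_pos (mixture_cdf n p mu sigma x - mixture_cdf n' p' mu' sigma' x)). simpl. nra.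
    + apply exp_right_int; auto.
    + pose proof (gen_full f 0 l1 l2 L1 L2) as HF.
      replace (cramer2_sq n p mu sigma n' p' mu' sigma') with (l1 + l2); auto.
      symmetry. unfold cramer2_sq. gen_val. exact HF.
Qed.

Lemma exp_ge1 s : 0 <= s -> 1 + s <= exp s.
Proof. intros Hs. destruct (Req_dec s 0) as [E|E]. - rewrite E, exp_0; lra. - left. apply exp_ineq1; lra. Qed.

Lemma exp_ge2 s : 0 <= s -> 1 + s + s * s / 4 <= exp s.
Proof.
  intros H. replace (exp s) with (exp (s/2) * exp (s/2)) by (rewrite <- exp_plus; f_equal; field).
  pose proof (exp_ge1 (s/2) ltac:(lra)). nra.
Qed.

Lemma exp_half_le2 : exp (1/2) <= 2.
Proof.
  pose proof exp_le_3. pose proof (exp_pos (1/2)).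
  assert (exp (1/2) * exp (1/2) = exp 1) by (rewrite <- exp_plus; f_equal; field). nra.
Qed.

Lemma exp_m1_ge : 1/3 <= exp (-1).
Proof. pose proof exp_le_3. pose proof (exp_pos 1). pose proof (exp_pos (-1)).
  assert (exp 1 * exp (-1) = 1) by (rewrite <- exp_plus; replace (1 + -1) with 0 by ring; apply exp_0). nra. Qed.

Definition CC := 1000.

Lemma master t w : Rabs (t - w) <= (1 + Rabs w) / 3 ->
  (1 + w ^ 2) * (1 + Rabs t) * phi t <= CC * exp (- (Rabs w) / 3).
Proof.
  intros Htw. unfold CC. pose proof (phi_le_exp0 t) as Hp. pose proof (phi_pos t).
  set (a := Rabs w) in *. set (q := Rabs t).
  assert (Ha : 0 <= a) by apply Rabs_pos. assert (Hq : 0 <= q) by apply Rabs_pos.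
  assert (Hw2 : w ^ 2 = a * a) by (unfold a; rewrite <- Rabs_mult, Rabs_right by nra; ring).
  assert (Ht2 : t ^ 2 = q * q) by (unfold q; rewrite <- Rabs_mult, Rabs_right by nra; ring).
  pose proof (Rabs_triang_inv t w). pose proof (Rabs_triang_inv w t). rewrite Rabs_minus_sym in H1.
  fold a q in H0, H1.
  assert (Hql : a - (1 + a) / 3 <= q) by lra. assert (Hqu : q <= a + (1 + a) / 3) by lra.
  destruct (Rle_lt_dec a 2) as [Hs|Hl].
  - assert (exp (- (t ^ 2) / 2) <= 1) by (rewrite <- exp_0; apply exp_le; nra).
    assert (exp (-1) <= exp (- a / 3)) by (apply exp_le; lra). pose proof exp_m1_ge.
    rewrite Hw2. assert ((1 + a * a) * (1 + q) <= 20) by nra.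
    apply Rle_trans with 20; [|lra].
    assert (phi t <= 1) by lra. pose proof (Rmult_le_pos _ _ (ltac:(nra) : 0 <= 1 + a*a) (ltac:(lra) : 0 <= 1 + q)). nra.
  - assert (Hq2 : a / 2 <= q) by lra.
    assert (E1 : exp (- (t ^ 2) / 2) <= exp (- a / 3) * (exp (1/2) * / exp ((a * a) / 16))).
    { rewrite <- exp_Ropp, <- !exp_plus. apply exp_le. rewrite Ht2.
      assert (a * a / 4 <= q * q) by nra. pose proof (pow2_ge_0 (a/4 - 2/3)). nra. }
    pose proof (exp_ge2 ((a * a) / 16) ltac:(nra)) as Eg. pose proof exp_half_le2.
    set (ee := exp ((a*a)/16)) in *. set (em := exp (- a / 3)) in *. pose proof (exp_pos (-a/3)) as Hem. fold em in Hem.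
    assert (Hee : 0 < ee) by (unfold ee; apply exp_pos).
    rewrite Hw2.
    apply Rle_trans with ((1 + a * a) * (1 + q) * (em * (2 * / ee))).
    + apply Rmult_le_compat_l; [nra|]. eapply Rle_trans; [exact Hp|]. eapply Rle_trans; [exact E1|].
      apply Rmult_le_compat_l; [lra|]. apply Rmult_le_compat_r; [left; apply Rinv_0_lt_compat; auto|lra].
    + replace ((1 + a * a) * (1 + q) * (em * (2 * / ee))) with (em * ((2 * (1 + a * a) * (1 + q)) / ee)) by (field; lra).
      rewrite Rmult_comm. apply Rmult_le_compat_r; [lra|].
      apply Rmult_le_reg_r with ee; auto. unfold Rdiv. rewrite Rmult_assoc, Rinv_l by lra.
      apply Rle_trans with (1000 * (1 + a * a / 16 + a * a / 16 * (a * a / 16) / 4)); [|nra].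
      assert (q <= (4 * a + 1) / 3) by lra.
      assert (2*(1+a*a)*(1+q) <= 2*(1+a*a)*((4+4*a)/3)) by (apply Rmult_le_compat_l; nra).
      pose proof (pow2_ge_0 (a*a - 10*a)). pose proof (pow2_ge_0 (a - 1)).
      nra.
Qed.

Definition EE w := CC * exp (- (Rabs w) / 3) / (1 + w ^ 2).

Lemma EE_pos w : 0 < EE w.
Proof. unfold EE, CC. apply Rdiv_lt_0_compat; [pose proof (exp_pos (- Rabs w / 3)); lra | pose proof (pow2_ge_0 w); lra]. Qed.

Lemma ball_bounds t w : Rabs (t - w) <= (1 + Rabs w) / 3 ->
  Rabs (phi t) <= EE w /\ Rabs (- t * phi t) <= EE w.
Proof.
  intros H. pose proof (master t w H) as M. pose proof (phi_pos t). pose proof (pow2_ge_0 w).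
  pose proof (Rabs_pos t).
  assert (Hk : (1 + Rabs t) * phi t <= EE w).
  { unfold EE. apply Rmult_le_reg_l with (1 + w ^ 2); [lra|].
    replace ((1 + w ^ 2) * (CC * exp (- Rabs w / 3) / (1 + w ^ 2))) with (CC * exp (- Rabs w / 3)) by (field; lra).
    rewrite <- Rmult_assoc. exact M. }
  rewrite Rabs_right by lra. split; [nra|].
  rewrite Rabs_mult, Rabs_Ropp, (Rabs_right (phi t)) by lra. nra.
Qed.

Lemma T1 v w : Rabs (v - w) <= (1 + Rabs w) / 3 -> Rabs (Phi v - Phi w) <= EE w * Rabs (v - w).
Proof.
  intros H. apply (bounded_variation Phi phi (EE w) w v). intros t Ht. split.
  - apply Phi_deriv.
  - apply (ball_bounds t w). lra.
Qed.

Lemma T2 v w : Rabs (v - w) <= (1 + Rabs w) / 3 ->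
  Rabs (Phi v - Phi w - (v - w) * phi w) <= EE w * (v - w) ^ 2.
Proof.
  intros H.
  assert (Hp : forall t, Rabs (t - w) <= Rabs (v - w) -> Rabs (phi t - phi w) <= EE w * Rabs (v - w)).
  { intros t Ht. eapply Rle_trans.
    - apply (bounded_variation phi (fun s => - s * phi s) (EE w) w t). intros s Hs. split.
      + apply phi_deriv.
      + apply (ball_bounds s w). lra.
    - apply Rmult_le_compat_l; [left; apply EE_pos|auto]. }
  pose proof (bounded_variation (fun t => Phi t - t * phi w) (fun t => phi t - phi w) (EE w * Rabs (v - w)) w v) as BV.
  replace (Phi v - Phi w - (v - w) * phi w) with ((Phi v - v * phi w) - (Phi w - w * phi w)) by ring.
  replace (EE w * (v - w) ^ 2) with (EE w * Rabs (v - w) * Rabs (v - w)).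
  2: { rewrite Rmult_assoc, <- Rabs_mult, Rabs_right by (apply Rle_ge; apply Rle_0_sqr). ring. }
  apply BV. intros t Ht. split; auto.
  apply (is_derive_minus (K:=R_AbsRing) (V:=R_NormedModule)).
  - apply Phi_deriv.
  - auto_derive; auto; ring.
Qed.

Notation FULL := (Rbar_locally m_infty) (only parsing).
Notation FULLR := (Rbar_locally p_infty) (only parsing).

Lemma gen_norm_full (f g : R -> R) lf lg : (forall x, Rabs (f x) <= g x) ->
  is_RInt_gen f FULL FULLR lf -> is_RInt_gen g FULL FULLR lg -> Rabs lf <= lg.
Proof.
  intros H Hf Hg. apply (@RInt_gen_norm R_CompleteNormedModule (Rbar_locally m_infty) (Rbar_locally p_infty) (Rbar_locally_filter _) (Rbar_locally_filter _) f g lf lg); auto.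
  - apply Filter_prod with (fun x => x < 0) (fun x => 0 < x); [simpl; exists 0; intros; auto|simpl; exists 0; intros; auto|].
    intros x y Hx Hy; simpl; lra.
  - apply Filter_prod with (fun x => True) (fun x => True); [simpl; exists 0; intros; auto|simpl; exists 0; intros; auto|].
    intros; simpl; intros; apply H.
Qed.

Lemma deriv_core (Lf : R -> R) (F : R -> R -> R) (G k : R -> R) a0 dl l K :
  0 < dl -> (forall a, Rabs (a - a0) < dl -> is_RInt_gen (F a) FULL FULLR (Lf a)) ->
  is_RInt_gen G FULL FULLR l -> is_RInt_gen k FULL FULLR K -> 0 <= K ->
  (forall a x, Rabs (a - a0) < dl -> Rabs (F a x - F a0 x - (a - a0) * G x) <= (a - a0) ^ 2 * k x) ->
  is_derive Lf a0 l.
Proof.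
  intros Hdl HF HG Hk HK Hrem.
  assert (Hb : forall a, Rabs (a - a0) < dl -> Rabs (Lf a - Lf a0 - (a - a0) * l) <= (a - a0) ^ 2 * K).
  { intros a Ha. apply (gen_norm_full (fun x => F a x - F a0 x - (a - a0) * G x) (fun x => (a - a0) ^ 2 * k x)).
    - intros; apply Hrem; auto.
    - assert (H0 : Rabs (a0 - a0) < dl) by (rewrite Rminus_diag, Rabs_R0; lra).
      pose proof (is_RInt_gen_minus (V:=R_NormedModule) _ _ _ _ (HF a Ha) (HF a0 H0)) as H1.
      pose proof (is_RInt_gen_scal (V:=R_NormedModule) _ (a - a0) _ HG) as H2.
      pose proof (is_RInt_gen_minus (V:=R_NormedModule) _ _ _ _ H1 H2) as H3.
      exact H3.
    - apply (is_RInt_gen_scal (V:=R_NormedModule) k ((a - a0) ^ 2) K Hk). }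
  apply is_derive_Reals. intros eps Heps.
  assert (Hd : 0 < Rmin dl (eps / (K + 1))) by (apply Rmin_pos; [lra|apply Rdiv_lt_0_compat; lra]).
  exists (mkposreal _ Hd). intros h Hh0 Hh. simpl in Hh.
  assert (Hh1 : Rabs h < dl) by (eapply Rlt_le_trans; [exact Hh|apply Rmin_l]).
  assert (Hh2 : Rabs h < eps / (K + 1)) by (eapply Rlt_le_trans; [exact Hh|apply Rmin_r]).
  specialize (Hb (a0 + h)). replace (a0 + h - a0) with h in Hb by ring. specialize (Hb Hh1).
  replace ((Lf (a0 + h) - Lf a0) / h - l) with ((Lf (a0 + h) - Lf a0 - h * l) / h) by (field; auto).
  unfold Rdiv. rewrite Rabs_mult, Rabs_inv.
  assert (Hah : 0 < Rabs h) by (apply Rabs_pos_lt; auto).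
  apply Rle_lt_trans with (h ^ 2 * K * / Rabs h).
  - apply Rmult_le_compat_r; [left; apply Rinv_0_lt_compat; auto|auto].
  - replace (h ^ 2) with (Rabs h * Rabs h) by (rewrite <- Rabs_mult, Rabs_right by (apply Rle_ge, Rle_0_sqr); ring).
    replace (Rabs h * Rabs h * K * / Rabs h) with (Rabs h * K) by (field; lra).
    apply Rmult_lt_reg_r with (/ (K + 1)) ; [apply Rinv_0_lt_compat; lra|].
    unfold Rdiv in Hh2. apply Rle_lt_trans with (Rabs h * (K + 1) * / (K + 1)); [|field_simplify; lra].
    apply Rmult_le_compat_r; [left; apply Rinv_0_lt_compat; lra|nra].
Qed.

Lemma quad_rem D0 p u d h B B' e c : Rabs D0 <= c -> 0 <= p <= 1 -> 0 <= e <= 1 ->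
  0 <= B -> 0 <= B' ->
  Rabs u <= Rabs h * B * e -> Rabs (u - h * d) <= h ^ 2 * B' * e ->
  Rabs ((D0 + p * u) ^ 2 - D0 ^ 2 - h * (2 * D0 * (p * d))) <= h ^ 2 * ((B ^ 2 + 2 * c * B') * e).
Proof.
  intros HD Hp He HB HB' Hu Hud.
  replace ((D0 + p * u) ^ 2 - D0 ^ 2 - h * (2 * D0 * (p * d))) with (p * p * (u * u) + 2 * D0 * p * (u - h * d)) by ring.
  eapply Rle_trans; [apply Rabs_triang|]. rewrite !Rabs_mult.
  rewrite (Rabs_right p) by lra. rewrite (Rabs_right 2) by lra.
  assert (Hh2 : h ^ 2 = Rabs h * Rabs h) by (rewrite <- Rabs_mult, Rabs_right by (apply Rle_ge, Rle_0_sqr); ring).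
  pose proof (Rabs_pos u). pose proof (Rabs_pos h). pose proof (Rabs_pos D0). pose proof (Rabs_pos (u - h * d)).
  assert (Huu : Rabs u * Rabs u <= h ^ 2 * B ^ 2 * e).
  { rewrite Hh2. apply Rle_trans with ((Rabs h * B * e) * (Rabs h * B * e)); [apply Rmult_le_compat; auto|].
    assert (0 <= Rabs h * B) by nra. assert (0 <= Rabs h * B * (Rabs h * B)) by nra.
    assert (e * e <= e) by nra.
    replace (Rabs h * B * e * (Rabs h * B * e)) with ((Rabs h * B * (Rabs h * B)) * (e * e)) by ring.
    replace (Rabs h * Rabs h * B ^ 2 * e) with ((Rabs h * B * (Rabs h * B)) * e) by ring.
    apply Rmult_le_compat_l; auto. }
  assert (p * p <= 1) by nra.
  assert (0 <= h ^ 2) by (rewrite Hh2; nra).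
  assert (T1 : p * p * (Rabs u * Rabs u) <= h ^ 2 * B ^ 2 * e) by nra.
  assert (T2 : 2 * Rabs D0 * p * Rabs (u - h * d) <= 2 * c * (h ^ 2 * B' * e)).
  { assert (Rabs D0 * p <= c) by nra. assert (0 <= Rabs D0 * p) by nra. nra. }
  nra.
Qed.

Definition env (m s x : R) := exp (- Rabs ((x - m) / s) / 3).

Lemma cts_env m s : ctsR (env m s).
Proof.
  unfold env. apply (cts_comp (fun x => - Rabs ((x - m) / s) / 3) exp); [|apply cts_exp].
  apply (cts_ext (fun x => Rabs ((x - m) / s) * (- / 3))); [intros; unfold Rdiv; ring|].
  apply (cts_mult (fun x => Rabs ((x - m) / s)) (fun _ => - / 3)); [apply cts_abs, cts_lin|apply cts_const].
Qed.

Lemma env_bounds m s x : 0 < env m s x <= 1.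
Proof. unfold env. split; [apply exp_pos|]. rewrite <- exp_0. apply exp_le. pose proof (Rabs_pos ((x - m) / s)). lra. Qed.

Lemma lim_left_bound (H : R -> R) L K k m : 0 < k -> (forall a, Rabs (H a - L) <= K * exp ((a - m) / k)) ->
  forall eps, 0 < eps -> exists M, forall a, a < M -> Rabs (H a - L) < eps.
Proof.
  intros Hk HB eps He. destruct (exp_lim_left K k m Hk eps He) as [M HM]. exists M. intros a Ha.
  specialize (HM a Ha). rewrite Rminus_0_r in HM. eapply Rle_lt_trans; [apply HB|]. eapply Rle_lt_trans; [apply Rle_abs|auto].
Qed.

Lemma lim_right_bound (H : R -> R) L K k m : 0 < k -> (forall a, Rabs (H a - L) <= K * exp (- ((a - m) / k))) ->
  forall eps, 0 < eps -> exists M, forall a, M < a -> Rabs (H a - L) < eps.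
Proof.
  intros Hk HB eps He. destruct (exp_lim_right K k m Hk eps He) as [M HM]. exists M. intros a Ha.
  specialize (HM a Ha). rewrite Rminus_0_r in HM. eapply Rle_lt_trans; [apply HB|]. eapply Rle_lt_trans; [apply Rle_abs|auto].
Qed.

Lemma env_int m s : 0 < s -> is_RInt_gen (env m s) FULL FULLR (6 * s).
Proof.
  intros Hs. replace (6 * s) with ((3 * s * exp ((m - m) / (3 * s)) - 0) + (0 - (- (3 * s)) * exp (- ((m - m) / (3 * s))))).
  2: { replace ((m - m) / (3 * s)) with 0 by (field; lra). rewrite Ropp_0, exp_0. ring. }
  apply (gen_full _ m).
  - apply (antideriv_left (env m s) (fun x => 3 * s * exp ((x - m) / (3 * s)))).
    + apply cts_env.
    + intros x Hx. unfold env. rewrite Rabs_left1.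
      * replace (- - ((x - m) / s) / 3) with ((x - m) / (3 * s)) by (field; lra).
        auto_derive; auto. unfold Rdiv, Rminus. field. lra.
      * unfold Rdiv. apply Rmult_le_0_r; [lra|left; apply Rinv_0_lt_compat; lra].
    + apply lim_left_bound with (K := 3 * s) (k := 3 * s) (m := m); [lra|]. intros a. rewrite Rminus_0_r.
      rewrite Rabs_right; [lra| apply Rle_ge; pose proof (exp_pos ((a - m)/(3*s))); nra].
  - apply (antideriv_right (env m s) (fun x => - (3 * s) * exp (- ((x - m) / (3 * s))))).
    + apply cts_env.
    + intros x Hx. unfold env. rewrite Rabs_right.
      * replace (- ((x - m) / s) / 3) with (- ((x - m) / (3 * s))) by (field; lra).
        auto_derive; auto. unfold Rdiv, Rminus. field. lra.
      * unfold Rdiv. apply Rle_ge, Rmult_le_pos; [lra|left; apply Rinv_0_lt_compat; lra].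
    + apply lim_right_bound with (K := 3 * s) (k := 3 * s) (m := m); [lra|]. intros a. rewrite Rminus_0_r.
      rewrite Rabs_mult, Rabs_Ropp, (Rabs_right (3 * s)) by lra. rewrite (Rabs_right (exp _)) by (left; apply exp_pos). lra.
Qed.

Lemma Phi_lin_deriv m s x : s <> 0 -> is_derive (fun y => Phi ((y - m) / s)) x (phi ((x - m) / s) / s).
Proof.
  intros Hs. replace (phi ((x - m) / s) / s) with (/ s * phi ((x - m) / s)) by (field; auto).
  apply (is_derive_comp Phi (fun y => (y - m) / s) x).
  - apply Phi_deriv.
  - auto_derive; auto. field; auto.
Qed.

Lemma phi_lin_deriv m s x : s <> 0 -> is_derive (fun y => phi ((y - m) / s)) x (- ((x - m) / s) * phi ((x - m) / s) / s).
Proof.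
  intros Hs. replace (- ((x - m) / s) * phi ((x - m) / s) / s) with (/ s * (- ((x - m) / s) * phi ((x - m) / s))) by (field; auto).
  apply (is_derive_comp phi (fun y => (y - m) / s) x).
  - apply phi_deriv.
  - auto_derive; auto. field; auto.
Qed.

Lemma EE_env m s x : EE ((x - m) / s) <= CC * env m s x.
Proof.
  unfold EE, env. pose proof (pow2_ge_0 ((x - m) / s)). pose proof (exp_pos (- Rabs ((x - m) / s) / 3)).
  unfold Rdiv at 1. apply Rle_trans with (CC * exp (- Rabs ((x - m) / s) / 3) * 1); [|lra].
  apply Rmult_le_compat_l; [unfold CC; lra|]. rewrite <- Rinv_1. apply Rinv_le_contravar; lra.
Qed.

Lemma deriv_scal_R (f : R -> R) x df K : is_derive f x df -> is_derive (fun y => K * f y) x (K * df).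
Proof. intros H. apply (is_derive_scal f x K df H). Qed.

Lemma decomp_mu n p mu sigma j a x : (j < n)%nat ->
  mixture_cdf n p (upd mu j a) sigma x = mixture_cdf n p mu sigma x - p j * Phi ((x - mu j) / sigma j) + p j * Phi ((x - a) / sigma j).
Proof. intros Hj. unfold mixture_cdf. apply (sumR_upd n (fun i y => p i * Phi ((x - y) / sigma i)) mu j a Hj). Qed.

Lemma decomp_sigma n p mu sigma j s x : (j < n)%nat ->
  mixture_cdf n p mu (upd sigma j s) x = mixture_cdf n p mu sigma x - p j * Phi ((x - mu j) / sigma j) + p j * Phi ((x - mu j) / s).
Proof. intros Hj. unfold mixture_cdf. apply (sumR_upd n (fun i y => p i * Phi ((x - mu i) / y)) sigma j s Hj). Qed.

Lemma gm_upd_mu n p mu sigma j a : is_gmixture n p mu sigma -> is_gmixture n p (upd mu j a) sigma.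
Proof. unfold is_gmixture; auto. Qed.

Lemma gm_upd_sigma n p mu sigma j s : is_gmixture n p mu sigma -> 0 < s -> is_gmixture n p mu (upd sigma j s).
Proof.
  intros [H1 [H2 H3]] Hs. split; [auto|split; [auto|]]. intros i Hi. unfold upd. destruct Nat.eq_dec; auto.
Qed.

Lemma D0_bound n p mu sigma n' p' mu' sigma' x : is_gmixture n p mu sigma -> is_gmixture n' p' mu' sigma' ->
  Rabs (mixture_cdf n p mu sigma x - mixture_cdf n' p' mu' sigma' x) <= cc.
Proof.
  intros H1 H2. pose proof (mixture_bounds _ _ _ _ x H1). pose proof (mixture_bounds _ _ _ _ x H2). apply Rabs_le. lra.
Qed.

Lemma cts_Phi_lin m s : ctsR (fun x => Phi ((x - m) / s)).
Proof. apply cts_comp; [apply cts_lin|apply cts_Phi]. Qed.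
Lemma cts_phi_lin m s : ctsR (fun x => phi ((x - m) / s)).
Proof. apply cts_comp; [apply cts_lin|apply cts_phi]. Qed.

Lemma Phi_le1 y : Phi y <= A0 * exp y.
Proof. apply Phi_left. Qed.
Lemma Phi_ge0 y : 0 <= Phi y.
Proof. apply Phi_left. Qed.
Lemma Phi_tail y : 0 <= cc - Phi y <= A0 * exp (- y).
Proof. apply Phi_right. Qed.

Lemma phi_le_half t : phi t <= 1 / 2.
Proof.
  unfold phi, std_normal_pdf. fold s2pi. pose proof s2pi_ge2.
  assert (exp (- (t ^ 2) / 2) <= 1) by (rewrite <- exp_0; apply exp_le; pose proof (pow2_ge_0 t); lra).
  pose proof (exp_pos (- (t ^ 2) / 2)).
  apply Rle_trans with (1 / s2pi).
  - unfold Rdiv. apply Rmult_le_compat_r; [left; apply Rinv_0_lt_compat; lra|lra].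
  - unfold Rdiv. rewrite !Rmult_1_l. apply Rinv_le_contravar; lra.
Qed.

Lemma EE_w_bounds m s x : let w := (x - m) / s in
  Rabs w * EE w <= CC * env m s x /\ w ^ 2 * EE w <= CC * env m s x /\ Rabs w * phi w <= CC * env m s x.
Proof.
  intros w. unfold EE, env. fold w. pose proof (pow2_ge_0 w). pose proof (exp_pos (- Rabs w / 3)).
  assert (Hw : Rabs w <= 1 + w ^ 2).
  { assert (w ^ 2 = Rabs w * Rabs w) by (rewrite <- Rabs_mult, Rabs_right by (apply Rle_ge, Rle_0_sqr); ring).
    pose proof (pow2_ge_0 (Rabs w - 1)). nra. }
  pose proof (Rabs_pos w).
  assert (Hc : 0 < CC * exp (- Rabs w / 3)) by (unfold CC; nra).
  split; [|split].
  - replace (Rabs w * (CC * exp (- Rabs w / 3) / (1 + w ^ 2))) with ((CC * exp (- Rabs w / 3)) * (Rabs w / (1 + w ^ 2))) by (field; lra).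
    apply Rle_trans with ((CC * exp (- Rabs w / 3)) * 1); [|lra]. apply Rmult_le_compat_l; [lra|].
    apply Rmult_le_reg_r with (1 + w ^ 2); [lra|]. unfold Rdiv. rewrite Rmult_assoc, Rinv_l by lra. lra.
  - replace (w ^ 2 * (CC * exp (- Rabs w / 3) / (1 + w ^ 2))) with ((CC * exp (- Rabs w / 3)) * (w ^ 2 / (1 + w ^ 2))) by (field; lra).
    apply Rle_trans with ((CC * exp (- Rabs w / 3)) * 1); [|lra]. apply Rmult_le_compat_l; [lra|].
    apply Rmult_le_reg_r with (1 + w ^ 2); [lra|]. unfold Rdiv. rewrite Rmult_assoc, Rinv_l by lra. lra.
  - pose proof (master w w ltac:(rewrite Rminus_diag, Rabs_R0; lra)). pose proof (phi_pos w).
    assert (1 <= 1 + w ^ 2) by lra. nra.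
Qed.

Lemma mu_case n p mu sigma n' p' mu' sigma' j :
  is_gmixture n p mu sigma -> is_gmixture n' p' mu' sigma' -> (j < n)%nat ->
  exists l, is_derive (fun a => cramer2_sq n p (upd mu j a) sigma n' p' mu' sigma') (mu j) l /\ Rabs l <= 4.
Proof.
  intros H1 H2 Hj.
  assert (Hs : 0 < sigma j) by (destruct H1 as [_ [_ H]]; auto).
  pose proof (p_le1 _ _ _ _ _ H1 Hj) as Hp.
  set (s := sigma j) in *. set (m := mu j). set (pj := p j) in *.
  set (F2 := fun x => mixture_cdf n' p' mu' sigma' x).
  set (D0 := fun x => mixture_cdf n p mu sigma x - F2 x).
  assert (HD0 : forall x, Rabs (D0 x) <= cc) by (intros; apply D0_bound; auto).
  assert (cD0 : ctsR D0) by (apply cts_minus; apply cts_mixture).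
  pose proof cc_bounds as Hcc.
  set (G := fun x => 2 * D0 x * (pj * (- phi ((x - m) / s) / s))).
  set (K1 := 2 * cc * pj).
  set (g := fun x => K1 * (phi ((x - m) / s) / s)).
  assert (cG : ctsR G).
  { unfold G. apply cts_mult; [apply cts_mult; [apply cts_const|auto]|].
    apply cts_mult; [apply cts_const|]. apply (cts_ext (fun x => phi ((x - m)/s) * (- / s))); [intros; unfold Rdiv; ring|].
    apply cts_mult; [apply cts_phi_lin|apply cts_const]. }
  assert (cg : ctsR g).
  { unfold g. apply cts_mult; [apply cts_const|]. apply (cts_mult (fun x => phi ((x - m) / s)) (fun _ => / s)); [apply cts_phi_lin|apply cts_const]. }
  assert (HK1 : 0 <= K1) by (unfold K1; nra).
  assert (Hg1 : is_RInt_gen g FULL (at_point m) (K1 * Phi ((m - m) / s) - 0)).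
  { apply (antideriv_left g (fun x => K1 * Phi ((x - m) / s))); auto.
    - intros x _. apply deriv_scal_R. apply Phi_lin_deriv. lra.
    - apply lim_left_bound with (K := K1 * A0) (k := s) (m := m); auto. intros a.
      rewrite Rminus_0_r, Rabs_right.
      + rewrite Rmult_assoc. apply Rmult_le_compat_l; auto. apply Phi_le1.
      + apply Rle_ge, Rmult_le_pos; auto. apply Phi_ge0. }
  assert (Hg2 : is_RInt_gen g (at_point m) FULLR (K1 * cc - K1 * Phi ((m - m) / s))).
  { apply (antideriv_right g (fun x => K1 * Phi ((x - m) / s))); auto.
    - intros x _. apply deriv_scal_R. apply Phi_lin_deriv. lra.
    - apply lim_right_bound with (K := K1 * A0) (k := s) (m := m); auto. intros a.
      pose proof (Phi_tail ((a - m) / s)).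
      replace (K1 * Phi ((a - m) / s) - K1 * cc) with (- (K1 * (cc - Phi ((a - m) / s)))) by ring.
      rewrite Rabs_Ropp, Rabs_right.
      + rewrite Rmult_assoc. apply Rmult_le_compat_l; auto. lra.
      + apply Rle_ge, Rmult_le_pos; auto. lra. }
  destruct (cmp_full G g m (K1 * Phi ((m - m) / s) - 0) (K1 * cc - K1 * Phi ((m - m) / s)) cG cg) as [l [Hl Hlb]]; [|exact Hg1|exact Hg2|].
  { intros x. unfold G, g, K1. pose proof (phi_pos ((x - m) / s)).
    assert (0 <= phi ((x - m) / s) / s) by (apply Rmult_le_pos; [lra|left; apply Rinv_0_lt_compat; lra]).
    replace (2 * D0 x * (pj * (- phi ((x - m) / s) / s))) with ((2 * pj * (phi ((x - m) / s) / s)) * (- D0 x)) by (unfold Rdiv; ring).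
    rewrite Rabs_mult, Rabs_Ropp, (Rabs_right (2 * pj * _)) by (apply Rle_ge; nra).
    apply Rle_trans with ((2 * pj * (phi ((x - m) / s) / s)) * cc); [apply Rmult_le_compat_l; [nra|auto]|right; ring]. }
  exists l. split.
  2: { eapply Rle_trans; [exact Hlb|]. unfold K1. nra. }
  set (B := CC / s). set (B' := CC / s ^ 2). set (Kk := B ^ 2 + 2 * cc * B').
  assert (HB : 0 <= B) by (unfold B, CC; apply Rmult_le_pos; [lra|left; apply Rinv_0_lt_compat; lra]).
  assert (HB' : 0 <= B') by (unfold B', CC; apply Rmult_le_pos; [lra|left; apply Rinv_0_lt_compat; nra]).
  assert (HKk : 0 <= Kk) by (unfold Kk; nra).
  apply (deriv_core _ (fun a x => (mixture_cdf n p (upd mu j a) sigma x - F2 x) ^ 2) G (fun x => Kk * env m s x) m (s / 3) l (Kk * (6 * s))).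
  - lra.
  - intros a _. apply cramer_is; [apply gm_upd_mu|]; auto.
  - exact Hl.
  - apply (is_RInt_gen_scal (V:=R_NormedModule) (env m s) Kk (6 * s)). apply env_int; auto.
  - nra.
  - intros a x Ha.
    assert (E1 : forall b, mixture_cdf n p (upd mu j b) sigma x - F2 x = D0 x + pj * (Phi ((x - b) / s) - Phi ((x - m) / s))).
    { intros b. rewrite decomp_mu by auto. unfold D0. fold s m pj. ring. }
    rewrite (E1 a), (E1 m).
    replace (D0 x + pj * (Phi ((x - m) / s) - Phi ((x - m) / s))) with (D0 x) by ring.
    unfold G. replace ((a - m) ^ 2 * (Kk * env m s x)) with ((a - m) ^ 2 * ((B ^ 2 + 2 * cc * B') * env m s x)) by (unfold Kk; ring).
    set (w := (x - m) / s). set (v := (x - a) / s).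
    assert (Hvw : v - w = - (a - m) / s) by (unfold v, w; field; lra).
    assert (Habs : Rabs (v - w) = Rabs (a - m) / s).
    { rewrite Hvw. unfold Rdiv. rewrite Rabs_mult, Rabs_Ropp, (Rabs_right (/ s)); auto. apply Rle_ge; left; apply Rinv_0_lt_compat; lra. }
    assert (Hsm : Rabs (v - w) <= (1 + Rabs w) / 3).
    { rewrite Habs. pose proof (Rabs_pos w). apply Rmult_le_reg_r with s; auto. unfold Rdiv.
      rewrite Rmult_assoc, Rinv_l by lra. nra. }
    pose proof (EE_env m s x) as HEE. fold w in HEE. pose proof (env_bounds m s x) as He.
    pose proof (EE_pos w).
    apply quad_rem; auto; try lra.
    + pose proof (T1 v w Hsm) as T. eapply Rle_trans; [exact T|]. rewrite Habs. unfold B.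
      apply Rle_trans with (CC * env m s x * (Rabs (a - m) / s)).
      * apply Rmult_le_compat_r; auto. apply Rmult_le_pos; [apply Rabs_pos|left; apply Rinv_0_lt_compat; lra].
      * right. field. lra.
    + replace (Phi v - Phi w - (a - m) * (- phi w / s)) with (Phi v - Phi w - (v - w) * phi w) by (rewrite Hvw; field; lra).
      pose proof (T2 v w Hsm) as T. eapply Rle_trans; [exact T|]. rewrite Hvw. unfold B'.
      apply Rle_trans with (CC * env m s x * ((- (a - m) / s) ^ 2)).
      * apply Rmult_le_compat_r; auto. apply pow2_ge_0.
      * right. field. lra.
Qed.

Lemma sigma_case n p mu sigma n' p' mu' sigma' j :
  is_gmixture n p mu sigma -> is_gmixture n' p' mu' sigma' -> (j < n)%nat ->
  exists l, is_derive (fun s => cramer2_sq n p mu (upd sigma j s) n' p' mu' sigma') (sigma j) l /\ Rabs l <= 4.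
Proof.
  intros H1 H2 Hj.
  assert (Hs : 0 < sigma j) by (destruct H1 as [_ [_ H]]; auto).
  pose proof (p_le1 _ _ _ _ _ H1 Hj) as Hp.
  set (s0 := sigma j) in *. set (m := mu j). set (pj := p j) in *.
  set (F2 := fun x => mixture_cdf n' p' mu' sigma' x).
  set (D0 := fun x => mixture_cdf n p mu sigma x - F2 x).
  assert (HD0 : forall x, Rabs (D0 x) <= cc) by (intros; apply D0_bound; auto).
  assert (cD0 : ctsR D0) by (apply cts_minus; apply cts_mixture).
  pose proof cc_bounds as Hcc.
  set (G := fun x => 2 * D0 x * (pj * (- ((x - m) / s0) * phi ((x - m) / s0) / s0))).
  set (K1 := 2 * cc * pj).
  set (g := fun x => K1 * (Rabs ((x - m) / s0) * phi ((x - m) / s0) / s0)).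
  assert (cG : ctsR G).
  { unfold G. apply cts_mult; [apply cts_mult; [apply cts_const|auto]|].
    apply cts_mult; [apply cts_const|].
    apply (cts_ext (fun x => ((x - m) / s0) * phi ((x - m)/s0) * (- / s0))); [intros; unfold Rdiv; ring|].
    apply cts_mult; [apply cts_mult; [apply cts_lin|apply cts_phi_lin]|apply cts_const]. }
  assert (cg : ctsR g).
  { unfold g. apply cts_mult; [apply cts_const|].
    apply (cts_mult (fun x => Rabs ((x - m) / s0) * phi ((x - m) / s0)) (fun _ => / s0)); [|apply cts_const].
    apply cts_mult; [apply cts_abs, cts_lin|apply cts_phi_lin]. }
  assert (HK1 : 0 <= K1) by (unfold K1; nra).
  assert (Hg1 : is_RInt_gen g FULL (at_point m) (K1 * phi ((m - m) / s0) - 0)).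
  { apply (antideriv_left g (fun x => K1 * phi ((x - m) / s0))); auto.
    - intros x Hx. replace (g x) with (K1 * (- ((x - m) / s0) * phi ((x - m) / s0) / s0)).
      + apply deriv_scal_R. apply phi_lin_deriv. lra.
      + unfold g. rewrite Rabs_left1; auto. unfold Rdiv. apply Rmult_le_0_r; [lra|left; apply Rinv_0_lt_compat; lra].
    - apply lim_left_bound with (K := K1 * A0) (k := s0) (m := m); auto. intros a.
      pose proof (phi_pos ((a - m) / s0)). pose proof (phi_le_exp ((a - m) / s0)).
      rewrite Rminus_0_r, Rabs_right by (apply Rle_ge; nra).
      rewrite Rmult_assoc. apply Rmult_le_compat_l; auto. lra. }
  assert (Hg2 : is_RInt_gen g (at_point m) FULLR (0 - (- K1) * phi ((m - m) / s0))).
  { apply (antideriv_right g (fun x => (- K1) * phi ((x - m) / s0))); auto.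
    - intros x Hx. replace (g x) with ((- K1) * (- ((x - m) / s0) * phi ((x - m) / s0) / s0)).
      + apply deriv_scal_R. apply phi_lin_deriv. lra.
      + unfold g. rewrite Rabs_right. field. lra.
        unfold Rdiv. apply Rle_ge, Rmult_le_pos; [lra|left; apply Rinv_0_lt_compat; lra].
    - apply lim_right_bound with (K := K1 * A0) (k := s0) (m := m); auto. intros a.
      pose proof (phi_pos ((a - m) / s0)). pose proof (phi_le_exp ((a - m) / s0)).
      rewrite Rminus_0_r, Rabs_mult, Rabs_Ropp, (Rabs_right K1), (Rabs_right (phi _)) by lra.
      rewrite Rmult_assoc. apply Rmult_le_compat_l; auto. lra. }
  destruct (cmp_full G g m (K1 * phi ((m - m) / s0) - 0) (0 - (- K1) * phi ((m - m) / s0)) cG cg) as [l [Hl Hlb]]; [|exact Hg1|exact Hg2|].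
  { intros x. unfold G, g. set (w := (x - m) / s0). pose proof (phi_pos w).
    assert (0 <= Rabs w * phi w / s0) by (apply Rmult_le_pos; [pose proof (Rabs_pos w); nra|left; apply Rinv_0_lt_compat; lra]).
    replace (2 * D0 x * (pj * (- w * phi w / s0))) with ((2 * pj * (phi w / s0)) * (- (D0 x * w))) by (unfold Rdiv; ring).
    rewrite (Rabs_mult (2 * pj * (phi w / s0))), Rabs_Ropp, (Rabs_mult (D0 x) w), (Rabs_right (2 * pj * (phi w / s0))).
    2: { apply Rle_ge. apply Rmult_le_pos; [lra|]. apply Rmult_le_pos; [lra|left; apply Rinv_0_lt_compat; lra]. }
    unfold K1. pose proof (Rabs_pos w). pose proof (Rabs_pos (D0 x)). specialize (HD0 x).
    assert (0 <= phi w / s0) by (apply Rmult_le_pos; [lra|left; apply Rinv_0_lt_compat; lra]).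
    replace (2 * cc * pj * (Rabs w * phi w / s0)) with ((2 * pj * (phi w / s0)) * (cc * Rabs w)) by (unfold Rdiv; ring).
    apply Rmult_le_compat_l; [nra|]. nra. }
  exists l. split.
  2: { eapply Rle_trans; [exact Hlb|]. pose proof (phi_le_half ((m - m) / s0)). pose proof (phi_pos ((m - m) / s0)). unfold K1.
    assert (cc * pj <= 2) by nra. assert (0 <= cc * pj) by nra. nra. }
  set (B := 2 * CC / s0). set (B' := 6 * CC / s0 ^ 2). set (Kk := B ^ 2 + 2 * cc * B').
  assert (Hi0 : 0 < / s0) by (apply Rinv_0_lt_compat; lra).
  assert (HB : 0 <= B) by (unfold B, CC; apply Rmult_le_pos; [lra|lra]).
  assert (HB' : 0 <= B') by (unfold B', CC; apply Rmult_le_pos; [lra|left; apply Rinv_0_lt_compat; nra]).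
  assert (HKk : 0 <= Kk) by (unfold Kk; nra).
  apply (deriv_core _ (fun a x => (mixture_cdf n p mu (upd sigma j a) x - F2 x) ^ 2) G (fun x => Kk * env m s0 x) s0 (s0 / 4) l (Kk * (6 * s0))).
  - lra.
  - intros a Ha. apply Rabs_def2 in Ha. apply cramer_is; [apply gm_upd_sigma|]; auto. lra.
  - exact Hl.
  - apply (is_RInt_gen_scal (V:=R_NormedModule) (env m s0) Kk (6 * s0)). apply env_int; auto.
  - nra.
  - intros s x Ha.
    assert (E1 : forall b, mixture_cdf n p mu (upd sigma j b) x - F2 x = D0 x + pj * (Phi ((x - m) / b) - Phi ((x - m) / s0))).
    { intros b. rewrite decomp_sigma by auto. unfold D0. fold s0 m pj. ring. }
    rewrite (E1 s), (E1 s0).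
    replace (D0 x + pj * (Phi ((x - m) / s0) - Phi ((x - m) / s0))) with (D0 x) by ring.
    unfold G. replace ((s - s0) ^ 2 * (Kk * env m s0 x)) with ((s - s0) ^ 2 * ((B ^ 2 + 2 * cc * B') * env m s0 x)) by (unfold Kk; ring).
    pose proof (Rabs_def2 _ _ Ha) as [Ha1 Ha2].
    assert (Hsp : 3 * s0 / 4 < s) by lra.
    set (h := s - s0) in *.
    assert (Hh3 : Rabs h <= s / 3) by (apply Rabs_le; lra).
    assert (His : 0 < / s) by (apply Rinv_0_lt_compat; lra).
    assert (His2 : / s <= 2 * / s0).
    { apply Rmult_le_reg_r with (s * s0); [nra|]. 
      replace (/ s * (s * s0)) with s0 by (field; lra). replace (2 * / s0 * (s * s0)) with (2 * s) by (field; lra). lra. }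
    pose proof (EE_w_bounds m s0 x) as [Ew1 [Ew2 Ew3]].
    set (w := (x - m) / s0) in *. set (v := (x - m) / s).
    pose proof (env_bounds m s0 x) as He. pose proof (EE_pos w). pose proof (Rabs_pos w). pose proof (Rabs_pos h).
    assert (Hvw : v - w = - (w * h) / s) by (unfold v, w, h; field; lra).
    assert (Habs : Rabs (v - w) = Rabs w * Rabs h * / s).
    { rewrite Hvw. unfold Rdiv. rewrite Rabs_mult, Rabs_Ropp, Rabs_mult, (Rabs_right (/ s)); auto. lra. }
    assert (Hsm : Rabs (v - w) <= (1 + Rabs w) / 3).
    { rewrite Habs. assert (Rabs h * / s <= 1 / 3).
      { apply Rmult_le_reg_r with s; [lra|]. rewrite Rmult_assoc, Rinv_l by lra. lra. }
      nra. }
    apply quad_rem; auto; try lra.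
    + pose proof (T1 v w Hsm) as T. eapply Rle_trans; [exact T|]. rewrite Habs. unfold B.
      replace (EE w * (Rabs w * Rabs h * / s)) with ((Rabs w * EE w) * (Rabs h * / s)) by ring.
      apply Rle_trans with ((CC * env m s0 x) * (Rabs h * (2 * / s0))).
      * apply Rmult_le_compat; [nra|apply Rmult_le_pos; [apply Rabs_pos|nra]|exact Ew1|apply Rmult_le_compat_l; [apply Rabs_pos|exact His2]].
      * right. unfold Rdiv. ring.
    + assert (Hsplit : Phi v - Phi w - h * (- w * phi w / s0) =
         (Phi v - Phi w - (v - w) * phi w) + (w * h ^ 2 * / s * / s0) * phi w) by (rewrite Hvw; unfold h; field; lra).
      rewrite Hsplit. eapply Rle_trans; [apply Rabs_triang|].
      pose proof (T2 v w Hsm) as T.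
      assert (P1 : EE w * (v - w) ^ 2 <= h ^ 2 * (4 * CC / s0 ^ 2) * env m s0 x).
      { rewrite Hvw. replace (EE w * (- (w * h) / s) ^ 2) with ((w ^ 2 * EE w) * (h ^ 2 * (/ s * / s))) by (field; lra).
        apply Rle_trans with ((CC * env m s0 x) * (h ^ 2 * (2 * / s0 * (2 * / s0)))).
        - apply Rmult_le_compat; [nra|apply Rmult_le_pos; [apply pow2_ge_0|nra]|exact Ew2|].
          apply Rmult_le_compat_l; [apply pow2_ge_0|]. apply Rmult_le_compat; lra.
        - right; field. lra. }
      assert (P2 : Rabs (w * h ^ 2 * / s * / s0 * phi w) <= h ^ 2 * (2 * CC / s0 ^ 2) * env m s0 x).
      { pose proof (phi_pos w). assert (0 <= h ^ 2) by apply pow2_ge_0.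
        replace (w * h ^ 2 * / s * / s0 * phi w) with ((w * phi w) * (h ^ 2 * / s * / s0)) by ring.
        rewrite Rabs_mult, (Rabs_mult w), (Rabs_right (phi w)) by lra.
        rewrite (Rabs_right (h ^ 2 * / s * / s0)) by (apply Rle_ge; apply Rmult_le_pos; [nra|lra]).
        apply Rle_trans with ((CC * env m s0 x) * (h ^ 2 * (2 * / s0) * / s0)).
        - apply Rmult_le_compat; [nra|apply Rmult_le_pos; [nra|lra]|exact Ew3|].
          apply Rmult_le_compat_r; [lra|]. apply Rmult_le_compat_l; auto.
        - right; field. lra. }
      unfold B'.
      assert (Rabs (Phi v - Phi w - (v - w) * phi w) <= h ^ 2 * (4 * CC / s0 ^ 2) * env m s0 x) by lra.
      replace (h ^ 2 * (6 * CC / s0 ^ 2) * env m s0 x) with (h ^ 2 * (4 * CC / s0 ^ 2) * env m s0 x + h ^ 2 * (2 * CC / s0 ^ 2) * env m s0 x) by (field; lra).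
      lra.
Qed.

Lemma upd_upd (f : nat -> R) j t v : upd (upd f j t) j v = upd f j v.
Proof. apply FunctionalExtensionality.functional_extensionality. intros i. unfold upd. destruct Nat.eq_dec; auto. Qed.

Lemma upd_eq (f : nat -> R) j t : upd f j t j = t.
Proof. unfold upd. destruct Nat.eq_dec; [auto|lia]. Qed.

Theorem theorem3 (n : nat) (p mu sigma : nat -> R)
    (n' : nat) (p' mu' sigma' : nat -> R)
    (HG1 : is_gmixture n p mu sigma) (HG2 : is_gmixture n' p' mu' sigma')
    (j : nat) (Hj : (j < n)%nat) :
  (exists l, is_derive (fun m => cramer2_sq n p (upd mu j m) sigma n' p' mu' sigma')
                       (mu j) l /\ Rabs l <= 4) /\
  (exists l, is_derive (fun s => cramer2_sq n p mu (upd sigma j s) n' p' mu' sigma')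
                       (sigma j) l /\ Rabs l <= 4) /\
  (forall a b : R,
     Rabs (cramer2_sq n p (upd mu j a) sigma n' p' mu' sigma'
           - cramer2_sq n p (upd mu j b) sigma n' p' mu' sigma') <= 4 * Rabs (a - b)) /\
  (forall a b : R, 0 < a -> 0 < b ->
     Rabs (cramer2_sq n p mu (upd sigma j a) n' p' mu' sigma'
           - cramer2_sq n p mu (upd sigma j b) n' p' mu' sigma') <= 4 * Rabs (a - b)).
Proof.
  split; [apply mu_case; auto|]. split; [apply sigma_case; auto|]. split.
  - intros a b. set (f := fun m => cramer2_sq n p (upd mu j m) sigma n' p' mu' sigma').
    assert (Hd : forall t, is_derive f t (Derive f t) /\ Rabs (Derive f t) <= 4).
    { intros t. destruct (mu_case n p (upd mu j t) sigma n' p' mu' sigma' j (gm_upd_mu _ _ _ _ _ _ HG1) HG2 Hj) as [l [Hl Hlb]].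
      rewrite upd_eq in Hl.
      assert (Hf : is_derive f t l).
      { unfold f. apply (is_derive_ext (fun a => cramer2_sq n p (upd (upd mu j t) j a) sigma n' p' mu' sigma')); auto.
        intros; rewrite upd_upd; auto. }
      rewrite (is_derive_unique f t l Hf). auto. }
    change (Rabs (f a - f b) <= 4 * Rabs (a - b)).
    apply (bounded_variation f (Derive f) 4 b a). intros; apply Hd.
  - intros a b Ha Hb. set (f := fun s => cramer2_sq n p mu (upd sigma j s) n' p' mu' sigma').
    assert (Hd : forall t, 0 < t -> is_derive f t (Derive f t) /\ Rabs (Derive f t) <= 4).
    { intros t Ht. destruct (sigma_case n p mu (upd sigma j t) n' p' mu' sigma' j (gm_upd_sigma _ _ _ _ _ _ HG1 Ht) HG2 Hj) as [l [Hl Hlb]].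
      rewrite upd_eq in Hl.
      assert (Hf : is_derive f t l).
      { unfold f. apply (is_derive_ext (fun a => cramer2_sq n p mu (upd (upd sigma j t) j a) n' p' mu' sigma')); auto.
        intros; rewrite upd_upd; auto. }
      rewrite (is_derive_unique f t l Hf). auto. }
    change (Rabs (f a - f b) <= 4 * Rabs (a - b)).
    assert (Hmin : 0 < Rmin b a) by (unfold Rmin; destruct Rle_dec; lra).
    destruct (MVT_gen f b a (Derive f)) as [c [Hc Hfc]].
    + intros x Hx. apply Hd. lra.
    + intros x Hx. apply continuity_pt_filterlim.
      apply (ex_derive_continuous (K:=R_AbsRing) (V:=R_NormedModule)). exists (Derive f x). apply Hd. lra.
    + rewrite Hfc, Rabs_mult. apply Rmult_le_compat_r; [apply Rabs_pos|]. apply Hd. lra.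
Qed.
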